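(* Let $f:X\to\mathcal G$ be convex and $x_0\in\operatorname{dom} f$. If $x_0$ solves the strict set-valued Minty inequality, i.e. $f'(x,x_0-x)\supseteq 0^+f(x_0)$ for all $x\in X$, then it solves the strict scalarized Minty inequality, i.e. $\varphi'_{f,z^*}(x,x_0-x)\le0$ for all $x\in X$ and $z^*\in C^-\setminus\{0\}$. If additionally the weak regularity condition $f'(x,u)=\bigcap_{z^*\in C^-\setminus\{0\}}f'_{z^*}(x,u)$ holds for all $x,u\in X$, then the reverse implication holds as well.
   Context: $X$ real linear space, $Z$ real locally convex Hausdorff space with dual $Z^*$, $C\subseteq Z$ closed convex cone, $0\in C$, $C^-=\{z^*:z^*(c)\le0\ \forall c\in C\}$, $C^-\setminus\{0\}\ne\emptyset$. $\mathcal G=\{A\subseteq Z:A=\operatorname{cl}\operatorname{co}(A+C)\}$; $A\oplus B=\operatorname{cl}\{a+b\}$, $tA=\{ta\}$ ($t>0$), $A\ominus B=\{z:B+\{z\}\subseteq A\}$; $0^+A=\{z:A+\{z\}\subseteq A\}$ for $A\ne\emptyset$. $f$ convex: $f(tx_1+(1-t)x_2)\supseteq tf(x_1)\oplus(1-t)f(x_2)$; $\operatorname{dom}f=\{x:f(x)\neq\emptyset\}$. For $g:X\to\mathcal G$, $g'(x,u)=\bigcap_{t_0>0}\operatorname{cl}\operatorname{co}\bigcup_{0<t<t_0}\frac1t(g(x+tu)\ominus g(x))$. On $\overline{\mathbb R}$: inf-addition $\dot+$ ($(-\infty)\dot+(+\infty)=+\infty$), $r\ominus s=\inf\{t\in\mathbb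 R:r\le s\dot+t\}$ ($\inf\emptyset=+\infty$). $\varphi_{f,z^*}(x)=\inf\{-z^*(z):z\in f(x)\}$ ($+\infty$ if $f(x)=\emptyset$), $\varphi'_{f,z^*}(x,u)=\inf_{t>0}\frac1t(\varphi_{f,z^*}(x+tu)\ominus\varphi_{f,z^*}(x))$. $f_{z^*}(x)=\{z:\varphi_{f,z^*}(x)\le -z^*(z)\}$, and $f'_{z^*}$ is the directional derivative of $f_{z^*}$. *)

(* Defs.v *)
From HB Require Import structures.
From mathcomp Require Import all_boot all_order all_algebra.
From mathcomp Require Import all_classical all_reals all_analysis.
Set Implicit Arguments. Unset Strict Implicit. Unset Printing Implicit Defensive.
Import Order.TTheory GRing.Theory Num.Theory.
Import numFieldNormedType.Exports.
Local Open Scope classical_set_scope.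
Local Open Scope ring_scope.

Section Defs.
Variable R : realType.

Definition cvx (M : lmodType R) (A : set M) : Prop :=
  forall a b (t : R), 0 <= t -> t <= 1 -> A a -> A b -> A (t *: a + (1 - t) *: b).

Definition co (M : lmodType R) (A : set M) : set M :=
  \bigcap_(B in [set B : set M | cvx B /\ A `<=` B]) B.

Definition msum (M : lmodType R) (A B : set M) : set M :=
  [set z | exists a b, A a /\ B b /\ z = a + b].

Definition closed_convex_cone (Z : tvsType R) (C : set Z) : Prop :=
  closed C /\ cvx C /\ (forall (t : R) c, 0 < t -> C c -> C (t *: c)).

Definition is_dual (Z : tvsType R) (zs : Z -> R) : Prop :=
  (forall (a : R) (u v : Z), zs (a *: u + v) = a * zs u + zs v) /\ continuous zs.

Definition negdual_nz (Z : tvsType R) (C : set Z) : set (Z -> R) :=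
  [set zs | is_dual zs /\ (forall c, C c -> zs c <= 0) /\ zs <> (fun _ => 0)].

Definition GSpace (Z : tvsType R) (C : set Z) : set (set Z) :=
  [set A | A = closure (co (msum A C))].

Definition oplus (Z : tvsType R) (A B : set Z) : set Z := closure (msum A B).

Definition sscale (M : lmodType R) (t : R) (A : set M) : set M :=
  [set z | exists a, A a /\ z = t *: a].

Definition ominus (M : lmodType R) (A B : set M) : set M :=
  [set z | forall b, B b -> A (b + z)].

Definition rec_cone (M : lmodType R) (A : set M) : set M :=
  [set z | forall a, A a -> A (a + z)].

Definition dom (X : lmodType R) (Z : tvsType R) (f : X -> set Z) : set X :=
  [set x | f x !=set0].

Definition sv_convex (X : lmodType R) (Z : tvsType R) (f : X -> set Z) : Prop :=
  forall x1 x2 (t : R), 0 < t -> t < 1 ->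
    oplus (sscale t (f x1)) (sscale (1 - t) (f x2)) `<=` f (t *: x1 + (1 - t) *: x2).

Definition sv_dir (X : lmodType R) (Z : tvsType R) (g : X -> set Z) (x u : X) : set Z :=
  \bigcap_(t0 in [set t0 : R | 0 < t0])
    closure (co (\bigcup_(t in [set t : R | 0 < t < t0])
                   sscale t^-1 (ominus (g (x + t *: u)) (g x)))).

(* inf-addition on the extended reals: (-oo) + (+oo) = +oo *)
Definition iadd (r s : \bar R) : \bar R := dual_adde r s.

Definition eminus (r s : \bar R) : \bar R :=
  ereal_inf [set (t%:E) | t in [set t : R | (r <= iadd s t%:E)%E]].

Definition phi (X : lmodType R) (Z : tvsType R) (f : X -> set Z) (zs : Z -> R)
    (x : X) : \bar R :=
  ereal_inf [set ((- zs z)%:E) | z in f x].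

Definition phi_dir (X : lmodType R) (h : X -> \bar R) (x u : X) : \bar R :=
  ereal_inf [set ((t^-1)%:E * eminus (h (x + t *: u)%R) (h x))%E
            | t in [set t : R | 0 < t]].

Definition f_zs (X : lmodType R) (Z : tvsType R) (f : X -> set Z) (zs : Z -> R)
    (x : X) : set Z :=
  [set z | (phi f zs x <= (- zs z)%:E)%E].

End Defs.

(* Main.v *)
Require Import Defs.
From HB Require Import structures.
From mathcomp Require Import all_boot all_order all_algebra.
From mathcomp Require Import all_classical all_reals all_analysis.
From mathcomp Require Import ring lra.
Import Order.TTheory GRing.Theory Num.Theory.
Import numFieldNormedType.Exports.
Local Open Scope classical_set_scope.
Local Open Scope ring_scope.

Lemma cont_line (R : realType) (Z : tvsType R) (z e : Z) :
  (fun r : R^o => z + r *: e) @ (0:R^o) --> z.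
Proof.
have h1 : (fun r : R^o => (r, e)) @ (0:R^o) --> ((0:R^o), e).
  by apply: (@cvg_pair _ _ _ (nbhs (0:R^o)) (nbhs (0:R^o)) (nbhs e)); [exact: cvg_id | exact: cvg_cst].
have h2 : (fun r : R^o => r *: e) @ (0:R^o) --> (0:R^o) *: e.
  exact: (cvg_comp _ _ h1 (@scale_continuous R Z _)).
rewrite scale0r in h2.
have h3 : (fun r : R^o => (z, r *: e)) @ (0:R^o) --> (z, 0 : Z).
  by apply: (@cvg_pair _ _ _ (nbhs (0:R^o)) (nbhs z) (nbhs (0:Z))); [exact: cvg_cst | exact: h2].
have := cvg_comp _ _ h3 (@add_continuous Z _).
by rewrite /= addr0.
Qed.

Lemma line_near (R : realType) (Z : tvsType R) (z e : Z) (N : set Z) :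
  nbhs z N -> exists2 s : R, 0 < s & N (z + s *: e).
Proof.
move=> Nz; have := @cont_line R Z z e N Nz.
move=> /nbhs_ballP [d /= d0 Hd].
exists (d / 2); first by lra.
apply: (Hd (d / 2)); rewrite /ball /= sub0r normrN ger0_norm; lra.
Qed.

Section Helpers.
Variable R : realType.

Lemma dual_lin (Z : tvsType R) (zs : Z -> R) : is_dual zs ->
  [/\ zs 0 = 0%R, forall u v, zs (u + v) = (zs u + zs v)%R
    & forall a u, zs (a *: u) = (a * zs u)%R].
Proof.
move=> [H _].
have h0 : zs 0 = 0%R.
  have := H 1%R 0 0; rewrite scale1r addr0 mul1r => /eqP.
  by rewrite -subr_eq subrr => /eqP.
split => //.
- by move=> u v; rewrite -[u]scale1r H mul1r scale1r.
- by move=> a u; rewrite -[a *: u]addr0 H h0 addr0.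
Qed.

Local Open Scope ereal_scope.
Lemma inf_shift (T : Type) (S : set T) (g : T -> R) (y : \bar R) (c : R) :
  (forall s, S s -> y <= (g s + c)%:E) ->
  y <= iadd (ereal_inf [set (g s)%:E | s in S]) c%:E.
Proof.
case: y => [y'| |] H; last by rewrite leNye.
- have key : (y' - c)%:E <= ereal_inf [set (g s)%:E | s in S].
    apply/ereal_infP => _ [s Ss <-]; have := H s Ss; rewrite !lee_fin; lra.
  move: key; case: (ereal_inf _) => [i| |] //=.
  + by rewrite !lee_fin => h; lra.
  + by move=> _; rewrite /iadd /= leey.
- have key : +oo <= ereal_inf [set (g s)%:E | s in S].
    by apply/ereal_infP => _ [s Ss <-]; have := H s Ss.
  by move: key; rewrite leye_eq => /eqP ->; rewrite /iadd /= leey.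
Qed.
End Helpers.

Section Part1.
Variable R : realType.

Lemma closed_half (d : \bar R) : closed [set r : R | (d <= (- r)%:E)%E].
Proof.
case: d => [r| |].
- have -> : [set r' : R | (r%:E <= (- r')%:E)%E] = [set r' | r' <= - r].
    by apply/seteqP; split => r' /=; rewrite lee_fin; lra.
  exact: closed_le.
- have -> : [set r' : R | (+oo <= (- r')%:E)%E] = set0 by apply/seteqP; split => r' //=.
  exact: closed0.
- have -> : [set r' : R | (-oo <= (- r')%:E)%E] = setT.
    by apply/seteqP; split => r' //= _; rewrite leNye.
  exact: closedT.
Qed.

Lemma conv_half (d : \bar R) (a b t : R) : (0 <= t)%R -> (t <= 1)%R ->
  (d <= a%:E)%E -> (d <= b%:E)%E -> (d <= (t * a + (1 - t) * b)%:E)%E.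
Proof.
move=> t0 t1; case: d => [r| |].
- rewrite !lee_fin => ha hb; nra.
- by rewrite leye_eq => /eqP.
- by move=> _ _; rewrite leNye.
Qed.

Lemma part1 (X : lmodType R) (Z : tvsType R) (f : X -> set Z) (zs : Z -> R) (x u : X) :
  is_dual zs -> sv_dir f x u 0 -> (phi_dir (phi f zs) x u <= 0)%E.
Proof.
move=> hd H0; have [z0 zD zZ] := @dual_lin R Z zs hd.
set d := phi_dir _ x u.
pose H := [set z : Z | (d <= (- zs z)%:E)%E].
have Hcl : closed H.
  have -> : H = zs @^-1` [set r : R | (d <= (- r)%:E)%E] by [].
  exact: ((continuous_closedP zs).1 hd.2 _ (closed_half d)).
have Hcv : cvx H.
  move=> a b t t0 t1 Ha Hb; rewrite /H /= zD !zZ.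
  have -> : (- (t * zs a + (1 - t) * zs b) = t * (- zs a) + (1 - t) * (- zs b))%R by ring.
  exact: conv_half.
have HU : \bigcup_(t in [set t : R | 0 < t < 1])
            sscale t^-1 (ominus (f (x + t *: u)) (f x)) `<=` H.
  move=> _ [t /= /andP [t0 t1] [w [Hw ->]]].
  rewrite /H /=.
  have hE : (eminus (phi f zs (x + t *: u)) (phi f zs x) <= (- zs w)%:E)%E.
    apply: ereal_inf_lbound; exists (- zs w) => //=.
    apply: (@inf_shift R Z (f x) (fun z => - zs z)) => a fa.
    apply: ereal_inf_lbound; exists (a + w); first exact: Hw.
    by rewrite zD opprD.
  have hd1 : (d <= (t^-1)%:E * eminus (phi f zs (x + t *: u)) (phi f zs x))%E.
    by apply: ereal_inf_lbound; exists t.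
  apply: (le_trans hd1).
  rewrite zZ (_ : (- (t^-1 * zs w))%:E = (t^-1)%:E * (- zs w)%:E)%E; last first.
    by rewrite -EFinM mulrN.
  rewrite lee_pmul2l //= lte_fin invr_gt0 //.
have := H0 1 ltr01.
have cH : co (\bigcup_(t in [set t : R | 0 < t < 1])
            sscale t^-1 (ominus (f (x + t *: u)) (f x))) `<=` H.
  by move=> z Hz; apply: Hz; split.
move=> /(closure_subset cH); rewrite -(closure_id H).1 // /H /= z0 oppr0; exact: id.
Qed.
End Part1.

Section Part2.
Variable R : realType.
Variables (X : lmodType R) (Z : tvsType R) (f : X -> set Z) (zs : Z -> R).
Hypothesis hd : is_dual zs.
Hypothesis hcv : sv_convex f.

Lemma conv_phi (x1 x2 : X) (l R1 R2 : R) : 0 < l -> l < 1 ->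
  (phi f zs x1 < R1%:E)%E -> (phi f zs x2 < R2%:E)%E ->
  (phi f zs (l *: x1 + (1 - l) *: x2) <= (l * R1 + (1 - l) * R2)%:E)%E.
Proof.
have [z0 zD zZ] := @dual_lin R Z zs hd.
move=> l0 l1 /ereal_inf_lt [_ [a1 fa1 <-] h1] /ereal_inf_lt [_ [a2 fa2 <-] h2].
have mem : f (l *: x1 + (1 - l) *: x2) (l *: a1 + (1 - l) *: a2).
  apply: (hcv x1 x2 l l0 l1); apply: subset_closure.
  exists (l *: a1), ((1 - l) *: a2); split; first by exists a1.
  by split => //; exists a2.
apply: (le_trans (ereal_inf_lbound _)); first by exists (l *: a1 + (1 - l) *: a2).
rewrite zD !zZ lee_fin; move: h1 h2; rewrite !lte_fin => h1 h2.
have l2 : 0 < 1 - l by lra.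
nra.
Qed.

Lemma lt_fin_ex (e : \bar R) : e != +oo%E -> exists r : R, (e < r%:E)%E.
Proof.
case: e => [r| |] //= _; first by exists (r + 1); rewrite lte_fin; lra.
by exists 0; rewrite ltNye.
Qed.

Lemma conv_phi_Ny (x1 x2 : X) (l M : R) : 0 < l -> l < 1 ->
  phi f zs x1 != +oo%E -> phi f zs x2 != +oo%E ->
  (phi f zs x1 = -oo%E \/ phi f zs x2 = -oo%E) ->
  (phi f zs (l *: x1 + (1 - l) *: x2) <= M%:E)%E.
Proof.
move=> l0 l1 n1 n2 [e1|e2].
- have [R2 h2] := lt_fin_ex _ n2.
  have -> : M = l * ((M - (1 - l) * R2) / l) + (1 - l) * R2 by field; lra.
  by apply: conv_phi => //; rewrite e1 ltNye.
- have [R1 h1] := lt_fin_ex _ n1.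
  have -> : M = l * R1 + (1 - l) * ((M - l * R1) / (1 - l)) by field; lra.
  by apply: conv_phi => //; rewrite e2 ltNye.
Qed.

Lemma rec_zs (x0 : X) (a z : Z) : (-oo < phi f zs x0)%E -> f x0 a ->
  rec_cone (f x0) z -> zs z <= 0.
Proof.
have [z0 zD zZ] := @dual_lin R Z zs hd.
move=> hlt fa hr.
have hn : forall n : nat, f x0 (a + n%:R *: z).
  elim=> [|n IH]; first by rewrite scale0r addr0.
  by rewrite -natr1 scalerDl scale1r addrA; apply: hr.
have hle : (phi f zs x0 <= (- zs a)%:E)%E by apply: ereal_inf_lbound; exists a.
move: hlt hle; case E : (phi f zs x0) => [q| |] //= _ hq.
have hb : forall n : nat, q <= - zs a - n%:R * zs z.
  move=> n; have : (q%:E <= (- zs (a + n%:R *: z))%:E)%E.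
    by rewrite -E; apply: ereal_inf_lbound; exists (a + n%:R *: z).
  by rewrite zD zZ lee_fin; lra.
rewrite leNgt; apply/negP => hz.
have [n hn2] : exists n : nat, (- zs a - q) / zs z < n%:R.
  by exists (Num.truncn ((- zs a - q) / zs z)).+1; exact: truncnS_gt.
have := hb n.
have : (- zs a - q) < n%:R * zs z by rewrite -ltr_pdivrMr.
lra.
Qed.

Lemma mid1 (x v : X) (l t : R) :
  x + (l * t) *: v = l *: (x + t *: v) + (1 - l) *: x.
Proof. by rewrite scalerDr scalerA scalerBl scale1r addrAC [l *: x + _]addrC subrK. Qed.
Lemma mid2 (x x0 : X) (t : R) :
  x + t *: (x0 - x) = t *: x0 + (1 - t) *: x.
Proof. by rewrite scalerBr scalerBl scale1r addrCA addrA. Qed.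

Lemma part2 (x0 x : X) (z : Z) :
  zs <> (fun _ => 0) -> dom f x0 ->
  (phi_dir (phi f zs) x (x0 - x) <= 0)%E -> rec_cone (f x0) z ->
  sv_dir (f_zs f zs) x (x0 - x) z.
Proof.
have [z0 zD zZ] := @dual_lin R Z zs hd.
move=> hnz [a fa] hphi hr t0 /= t0pos.
set u := x0 - x.
set U := \bigcup_(t in [set t : R | 0 < t < t0])
   sscale t^-1 (ominus (f_zs f zs (x + t *: u)) (f_zs f zs x)).
suff : closure U z.
  apply: closure_subset => y Uy B [_ UB]; exact: UB.
have K : forall t y, 0 < t -> t < t0 ->
   (forall b, (phi f zs x <= (- zs b)%:E)%E ->
      (phi f zs (x + t *: u) <= (- zs (b + t *: y))%:E)%E) -> U y.
  move=> t y tp tl Hb; exists t; first by rewrite /= tp tl.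
  exists (t *: y); split; first exact: Hb.
  by rewrite scalerA mulVf ?gt_eqF // scale1r.
have hx0 : phi f zs x0 != +oo%E.
  have : (phi f zs x0 <= (- zs a)%:E)%E by apply: ereal_inf_lbound; exists a.
  by case: (phi f zs x0).
have caseB : phi f zs x != +oo%E ->
    (phi f zs x0 = -oo%E \/ phi f zs x = -oo%E) -> closure U z.
  move=> hx hor; apply: subset_closure.
  pose t := Num.min t0 1 / 2.
  have tp : 0 < t by rewrite /t divr_gt0 // lt_min t0pos ltr01.
  have tm : Num.min t0 1 <= t0 /\ Num.min t0 1 <= 1 by rewrite !ge_min !lexx orbT.
  apply: (K t) => //; first by rewrite /t; lra.
  move=> b _; rewrite /u mid2.
  apply: conv_phi_Ny => //; rewrite /t; lra.
case Ep : (phi f zs x) => [r| |].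
- have [Ex0|Ex0] := eqVneq (phi f zs x0) -oo%E.
    by apply: caseB; [rewrite Ep | left].
  have zz : zs z <= 0.
    by apply: (@rec_zs x0 a z) => //; rewrite ltNye.
  have [e he] : exists e, zs e = -1.
    have /existsNP [v hv] : ~ forall v, zs v = 0.
      by move=> h; apply: hnz; apply/funext.
    exists ((- (zs v)^-1) *: v); rewrite zZ mulNr mulVf //; exact/eqP.
  move=> N Nz.
  have [s s0 hN] := @line_near R Z z e N Nz.
  have : (phi_dir (phi f zs) x u < (s / 2)%:E)%E.
    by apply: (le_lt_trans hphi); rewrite lte_fin; lra.
  move=> /ereal_inf_lt [_ [t' /= t'0 <-] ht'].
  have hE : (eminus (phi f zs (x + t' *: u)) (phi f zs x) < (t' * (s / 2))%:E)%E.
    move: ht'; case: (eminus _ _) => [e'| |] //=.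
    + rewrite lte_fin => h.
      by rewrite -(ltr_pM2l t'0) mulrA mulfV ?gt_eqF // mul1r in h.
    + by rewrite muleC gt0_mulye ?lte_fin ?invr_gt0.
    + by move=> _; rewrite ltNye.
  move: hE; rewrite Ep => /ereal_inf_lt [_ [rho /= hrho <-] hrho2].
  have h1 : (phi f zs (x + t' *: u) < (r + t' * (s / 2))%:E)%E.
    apply: (le_lt_trans hrho); rewrite lte_fin; move: hrho2; rewrite lte_fin; lra.
  pose l := Num.min (1 / 2) (t0 / (2 * t')).
  have l0 : 0 < l by rewrite /l lt_min; apply/andP; split; [lra|apply: divr_gt0 => //; lra].
  have l1 : l <= 1 / 2 by rewrite /l ge_min lexx.
  have l2 : l <= t0 / (2 * t') by rewrite /l ge_min lexx orbT.
  have l3 : l * t' <= t0 / 2.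
    have := ler_wpM2r (ltW t'0) l2.
    by rewrite (_ : t0 / (2 * t') * t' = t0 / 2) //; field; lra.
  exists (z + s *: e); split; last exact: hN.
  apply: (K (l * t')); [exact: mulr_gt0|lra|].
  move=> b; rewrite Ep lee_fin => hb; rewrite /u mid1.
  have h2 : (phi f zs x < (r + l * t' * (s / 2))%:E)%E.
    rewrite Ep lte_fin; have : 0 < l * t' * (s / 2) by apply: mulr_gt0 => //; [exact: mulr_gt0|lra].
    lra.
  apply: (le_trans (conv_phi _ _ _ _ _ l0 _ h1 h2)); first lra.
  rewrite lee_fin !zD !zZ zD zZ he.
  have p1 : 0 < l * t' by exact: mulr_gt0.
  have p2 : l * t' * zs z <= 0 by rewrite pmulr_rle0.
  have p3 : 0 <= l * (l * t' * s) by apply: mulr_ge0; [lra|apply: mulr_ge0; lra].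
  nra.
- apply: subset_closure; apply: (K (t0 / 2) z); [lra|lra|].
  by move=> b; rewrite Ep leye_eq => /eqP.
- by apply: caseB; [rewrite Ep | right].
Qed.
End Part2.

Theorem mainTheorem11 (R : realType) (X : lmodType R) (Z : tvsType R)
  (C : set Z) (f : X -> set Z) (x0 : X) :
  hausdorff_space Z ->
  closed_convex_cone C -> C 0 ->
  negdual_nz C !=set0 ->
  (forall x, GSpace C (f x)) ->
  sv_convex f ->
  dom f x0 ->
  ((forall x : X, rec_cone (f x0) `<=` sv_dir f x (x0 - x)) ->
     forall (x : X) (zs : Z -> R), negdual_nz C zs ->
       (phi_dir (phi f zs) x (x0 - x) <= 0)%E)
  /\
  ((forall x u : X,
      sv_dir f x u = \bigcap_(zs in negdual_nz C) sv_dir (f_zs f zs) x u) ->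
   (forall (x : X) (zs : Z -> R), negdual_nz C zs ->
       (phi_dir (phi f zs) x (x0 - x) <= 0)%E) ->
   forall x : X, rec_cone (f x0) `<=` sv_dir f x (x0 - x)).
Proof.
move=> _ _ _ _ _ hcv hdom; split.
- move=> hyp x zs [hd [_ hnz]].
  apply: (@part1 R X Z f zs x (x0 - x) hd); apply: hyp => a fa; by rewrite addr0.
- move=> hreg hyp x z hz; rewrite hreg => zs [hd [hC hnz]].
  exact: (@part2 R X Z f zs hd hcv x0 x z hnz hdom (hyp x zs (conj hd (conj hC hnz))) hz).
Qed.
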